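(* Let $\Gamma\subseteq\mathbb R^n$ be an open convex set, $S\subseteq\Gamma$ a nonempty convex set, and $f:\Gamma\to\mathbb R$ a continuously differentiable function that is quasiconvex on $\Gamma$. Let $\bar S=\arg\min\{f(x)\mid x\in S\}$, and suppose $\bar x\in\bar S$ with $\nabla f(\bar x)\neq 0$. Define \[ \begin{aligned} S_1&:=\{x\in S\mid \nabla f(x)^T(\bar x-x)=0,\ \nabla f(x)\ne0\},\\ S_2&:=\{x\in S\mid \nabla f(x)^T(\bar x-x)\ge 0,\ \nabla f(x)\ne0\},\\ S_3&:=\{x\in S\mid \nabla f(x)^T(\bar x-x)=\nabla f(\bar x)^T(x-\bar x),\ \nabla f(x)\ne0\},\\ S_4&:=\{x\in S\mid \nabla f(x)^T(\bar x-x)\ge\nabla f(\bar x)^T(x-\bar x),\ \nabla f(x)\ne0\},\\ S_5&:=\{x\in S\mid \nabla f(x)^T(\bar x-x)=\nabla f(\bar x)^T(x-\bar x)=0,\ \nabla f(x)\ne0\}. \end{aligned} \] Then $\bar S=S_1=S_2=S_3=S_4=S_5$.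
   Context: A function $f:\Gamma\to\mathbb R$ on a convex set $\Gamma\subseteq\mathbb R^n$ is quasiconvex on $\Gamma$ iff $f(x+t(y-x))\le\max\{f(x),f(y)\}$ for all $x,y\in\Gamma$ and $t\in[0,1]$. *)

(* Defs.v *)
From Stdlib Require Import Reals.
From Stdlib Require Vectors.Fin.
Open Scope R_scope.

Definition vec (n : nat) := Fin.t n -> R.

Definition vadd {n} (u v : vec n) : vec n := fun i => u i + v i.
Definition vsub {n} (u v : vec n) : vec n := fun i => u i - v i.
Definition vscal {n} (t : R) (u : vec n) : vec n := fun i => t * u i.
Definition vzero {n} : vec n := fun _ => 0.

Fixpoint dot {n : nat} : vec n -> vec n -> R :=
  match n as m return vec m -> vec m -> R with
  | O => fun _ _ => 0
  | S k => fun u v => u Fin.F1 * v Fin.F1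
                      + dot (fun i => u (Fin.FS i)) (fun i => v (Fin.FS i))
  end.

Definition vnorm {n} (u : vec n) : R := sqrt (dot u u).

Definition vec_open_set {n} (G : vec n -> Prop) : Prop :=
  forall x, G x -> exists r, 0 < r /\ forall y, vnorm (vsub y x) < r -> G y.

Definition vec_convex_set {n} (G : vec n -> Prop) : Prop :=
  forall x y t, G x -> G y -> 0 <= t <= 1 -> G (vadd x (vscal t (vsub y x))).

Definition quasiconvex_on {n} (G : vec n -> Prop) (f : vec n -> R) : Prop :=
  forall x y t, G x -> G y -> 0 <= t <= 1 ->
    f (vadd x (vscal t (vsub y x))) <= Rmax (f x) (f y).

Definition vec_gradient_on {n} (G : vec n -> Prop) (f : vec n -> R) (g : vec n -> vec n) : Prop :=
  forall x, G x -> forall eps, 0 < eps -> exists delta, 0 < delta /\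
    forall y, G y -> vnorm (vsub y x) < delta ->
      Rabs (f y - f x - dot (g x) (vsub y x)) <= eps * vnorm (vsub y x).

Definition vec_continuous_on {n} (G : vec n -> Prop) (g : vec n -> vec n) : Prop :=
  forall x, G x -> forall eps, 0 < eps -> exists delta, 0 < delta /\
    forall y, G y -> vnorm (vsub y x) < delta -> vnorm (vsub (g y) (g x)) < eps.

Definition C1_on {n} (G : vec n -> Prop) (f : vec n -> R) (g : vec n -> vec n) : Prop :=
  vec_gradient_on G f g /\ vec_continuous_on G g.

Definition argmin_on {n} (S : vec n -> Prop) (f : vec n -> R) : vec n -> Prop :=
  fun x => S x /\ forall y, S y -> f x <= f y.

Definition set_eq {n} (A B : vec n -> Prop) : Prop := forall x, A x <-> B x.

(* Main.v *)
Require Import Defs.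
From Stdlib Require Import Reals Lra Psatz FunctionalExtensionality.
From Stdlib Require Vectors.Fin.
Open Scope R_scope.
Lemma dot_lin_r n : forall (u v w : vec n) a b,
  dot u (fun i => a * v i + b * w i) = a * dot u v + b * dot u w.
Proof.
  induction n; intros; simpl. ring.
  specialize (IHn (fun i => u (Fin.FS i)) (fun i => v (Fin.FS i)) (fun i => w (Fin.FS i)) a b).
  simpl in IHn. rewrite IHn. ring.
Qed.

Lemma dot_comm n : forall (u v : vec n), dot u v = dot v u.
Proof.
  induction n; intros; simpl. ring.
  rewrite IHn. ring.
Qed.

Lemma dot_lin_l n : forall (u v w : vec n) a b,
  dot (fun i => a * v i + b * w i) u = a * dot v u + b * dot w u.
Proof. intros. rewrite dot_comm, dot_lin_r, (dot_comm _ u v), (dot_comm _ u w). ring. Qed.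

Lemma dot_zero_l n : forall (u : vec n), dot vzero u = 0.
Proof. induction n; intros; simpl. ring. unfold vzero in *. rewrite IHn. ring. Qed.

Lemma dot_self_nonneg n : forall (u : vec n), 0 <= dot u u.
Proof. induction n; intros; simpl. lra. specialize (IHn (fun i => u (Fin.FS i))). nra. Qed.

Lemma dot_self_zero n : forall (u : vec n), dot u u = 0 -> u = vzero.
Proof.
  induction n; intros u H; apply functional_extensionality; intro i.
  - inversion i.
  - simpl in H. pose proof (dot_self_nonneg _ (fun i => u (Fin.FS i))).
    assert (H1 : u Fin.F1 = 0) by nra.
    assert (H2 : (fun i => u (Fin.FS i)) = vzero) by (apply IHn; nra).
    apply (Fin.caseS' i (fun i => u i = vzero i)). exact H1.
    intro j. exact (f_equal (fun g => g j) H2).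
Qed.

Lemma dot_self_pos n (u : vec n) : u <> vzero -> 0 < dot u u.
Proof.
  intro H. destruct (Rle_lt_or_eq_dec 0 (dot u u) (dot_self_nonneg _ u)); auto.
  exfalso. apply H. apply dot_self_zero. auto.
Qed.

Lemma cs_sq n (u v : vec n) : (dot u v)^2 <= dot u u * dot v v.
Proof.
  assert (Q : forall t, 0 <= dot u u - 2 * t * dot u v + t * t * dot v v).
  { intro t. pose proof (dot_self_nonneg _ (fun i => 1 * u i + (- t) * v i)) as H.
    rewrite dot_lin_r in H. rewrite !dot_lin_l in H. rewrite (dot_comm _ v u) in H. nra. }
  pose proof (dot_self_nonneg _ v) as Hv. pose proof (dot_self_nonneg _ u) as Hu.
  destruct (Rle_lt_or_eq_dec _ _ Hv) as [Hp|H0].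
  - specialize (Q (dot u v / dot v v)).
    assert (E : dot u v / dot v v * dot v v = dot u v) by (field; lra).
    nra.
  - rewrite <- H0. destruct (Req_dec (dot u v) 0) as [Z|Z].
    + rewrite Z. nra.
    + specialize (Q ((dot u u + 1) / (2 * dot u v))). rewrite <- H0 in Q.
      assert (E : 2 * ((dot u u + 1) / (2 * dot u v)) * dot u v = dot u u + 1) by (field; auto).
      nra.
Qed.

Lemma cs n (u v : vec n) : Rabs (dot u v) <= vnorm u * vnorm v.
Proof.
  unfold vnorm. rewrite <- sqrt_mult_alt by apply dot_self_nonneg.
  rewrite <- sqrt_Rsqr_abs. apply sqrt_le_1_alt. unfold Rsqr.
  pose proof (cs_sq n u v). simpl in H. lra.
Qed.

Lemma vnorm_scal n (t : R) (h : vec n) : vnorm (vscal t h) = Rabs t * vnorm h.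
Proof.
  unfold vnorm, vscal.
  replace (fun i => t * h i) with (fun i => t * h i + 0 * h i)
    by (apply functional_extensionality; intro; ring).
  rewrite dot_lin_r, !dot_lin_l.
  replace (t * (t * dot h h + 0 * dot h h) + 0 * (t * dot h h + 0 * dot h h)) with (t*t * dot h h) by ring.
  rewrite sqrt_mult_alt by nra. f_equal. rewrite <- sqrt_Rsqr_abs. reflexivity.
Qed.
Lemma Rabs_le_inv (a b : R) : Rabs a <= b -> - b <= a <= b.
Proof. unfold Rabs; destruct (Rcase_abs a); lra. Qed.

Lemma vsub_line n (x h : vec n) t : vsub (vadd x (vscal t h)) x = vscal t h.
Proof. apply functional_extensionality; intro; unfold vsub, vadd, vscal; ring. Qed.

Lemma dot_scal n (u h : vec n) t : dot u (vscal t h) = t * dot u h.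
Proof.
  unfold vscal. replace (fun i => t * h i) with (fun i => t * h i + 0 * h i)
    by (apply functional_extensionality; intro; ring).
  rewrite dot_lin_r. ring.
Qed.

Lemma vnorm_nonneg n (u : vec n) : 0 <= vnorm u.
Proof. apply sqrt_pos. Qed.

Lemma dirderiv n (Gam : vec n -> Prop) f gradf x h :
  vec_gradient_on Gam f gradf -> Gam x -> forall eps, 0 < eps ->
  exists t0, 0 < t0 /\ forall t, 0 < t < t0 -> Gam (vadd x (vscal t h)) ->
    Rabs (f (vadd x (vscal t h)) - f x - t * dot (gradf x) h) <= eps * t.
Proof.
  intros Hg Hx eps He.
  pose proof (vnorm_nonneg _ h) as Hn.
  destruct (Hg x Hx (eps / (vnorm h + 1))) as [d [Hd Hy]].
  { apply Rdiv_lt_0_compat; lra. }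
  exists (d / (vnorm h + 1)). split. apply Rdiv_lt_0_compat; lra.
  intros t Ht HG.
  assert (Hnt : vnorm (vsub (vadd x (vscal t h)) x) = t * vnorm h).
  { rewrite vsub_line, vnorm_scal, Rabs_right by lra. reflexivity. }
  assert (Hlt : vnorm (vsub (vadd x (vscal t h)) x) < d).
  { rewrite Hnt. destruct Ht as [Ht1 Ht2].
    apply Rmult_lt_compat_r with (r := vnorm h + 1) in Ht2; [|lra].
    unfold Rdiv in Ht2. rewrite Rmult_assoc, Rinv_l, Rmult_1_r in Ht2 by lra. nra. }
  specialize (Hy _ HG Hlt). rewrite Hnt in Hy. rewrite vsub_line, dot_scal in Hy.
  eapply Rle_trans; [exact Hy|].
  assert (eps / (vnorm h + 1) * vnorm h <= eps).
  { replace (eps / (vnorm h + 1) * vnorm h) with (eps - eps / (vnorm h + 1)) by (field; lra).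
    assert (0 < eps / (vnorm h + 1)) by (apply Rdiv_lt_0_compat; lra). lra. }
  nra.
Qed.

Lemma open_line n (Gam : vec n -> Prop) x h :
  vec_open_set Gam -> Gam x -> exists t0, 0 < t0 /\ forall t, 0 <= t < t0 -> Gam (vadd x (vscal t h)).
Proof.
  intros Ho Hx. destruct (Ho x Hx) as [r [Hr Hy]].
  pose proof (vnorm_nonneg _ h).
  exists (r / (vnorm h + 1)). split. apply Rdiv_lt_0_compat; lra.
  intros t [Ht1 Ht2]. apply Hy. rewrite vsub_line, vnorm_scal, Rabs_right by lra.
  apply Rmult_lt_compat_r with (r := vnorm h + 1) in Ht2; [|lra].
  unfold Rdiv in Ht2. rewrite Rmult_assoc, Rinv_l, Rmult_1_r in Ht2 by lra. nra.
Qed.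

Lemma dir_le n (Gam : vec n -> Prop) f gradf x h :
  vec_gradient_on Gam f gradf -> Gam x ->
  (forall t, 0 < t <= 1 -> Gam (vadd x (vscal t h)) /\ f (vadd x (vscal t h)) <= f x) ->
  dot (gradf x) h <= 0.
Proof.
  intros Hg Hx H. destruct (Rle_lt_dec (dot (gradf x) h) 0) as [|Hp]; auto.
  destruct (dirderiv n Gam f gradf x h Hg Hx (dot (gradf x) h / 2)) as [t0 [Ht0 Hd]]; [lra|].
  set (t := Rmin (t0/2) 1).
  assert (0 < t /\ t < t0 /\ t <= 1) as [T1 [T2 T3]].
  { unfold t. unfold Rmin. destruct (Rle_dec (t0/2) 1); lra. }
  destruct (H t) as [HG Hf]; [lra|].
  specialize (Hd t (conj T1 T2) HG). apply Rabs_le_inv in Hd. nra.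
Qed.

Lemma dir_ge n (Gam : vec n -> Prop) f gradf x h :
  vec_gradient_on Gam f gradf -> Gam x ->
  (forall t, 0 < t <= 1 -> Gam (vadd x (vscal t h)) /\ f x <= f (vadd x (vscal t h))) ->
  0 <= dot (gradf x) h.
Proof.
  intros Hg Hx H. destruct (Rle_lt_dec 0 (dot (gradf x) h)) as [|Hp]; auto.
  destruct (dirderiv n Gam f gradf x h Hg Hx (- dot (gradf x) h / 2)) as [t0 [Ht0 Hd]]; [lra|].
  set (t := Rmin (t0/2) 1).
  assert (0 < t /\ t < t0 /\ t <= 1) as [T1 [T2 T3]].
  { unfold t. unfold Rmin. destruct (Rle_dec (t0/2) 1); lra. }
  destruct (H t) as [HG Hf]; [lra|].
  specialize (Hd t (conj T1 T2) HG). apply Rabs_le_inv in Hd. nra.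
Qed.

Lemma qc_grad n (Gam : vec n -> Prop) f gradf x y :
  vec_convex_set Gam -> quasiconvex_on Gam f -> vec_gradient_on Gam f gradf ->
  Gam x -> Gam y -> f y <= f x -> dot (gradf x) (vsub y x) <= 0.
Proof.
  intros Hc Hq Hg Hx Hy Hf. apply (dir_le n Gam f gradf); auto.
  intros t Ht. split. apply Hc; auto; lra.
  eapply Rle_trans. apply Hq; auto; lra. unfold Rmax; destruct (Rle_dec (f x) (f y)); lra.
Qed.

Lemma pseudo n (Gam : vec n -> Prop) f gradf x y :
  vec_open_set Gam -> vec_convex_set Gam -> quasiconvex_on Gam f -> vec_gradient_on Gam f gradf ->
  Gam x -> Gam y -> gradf x <> vzero -> dot (gradf x) (vsub y x) >= 0 -> f x <= f y.
Proof.
  intros Ho Hc Hq Hg Hx Hy Hnz Hd.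
  destruct (Rle_lt_dec (f x) (f y)) as [|Hlt]; auto. exfalso.
  set (g := gradf x).
  pose proof (dot_self_pos _ g Hnz) as Hgg.
  destruct (dirderiv n Gam f gradf y g Hg Hy 1) as [t0 [Ht0 Hdd]]; [lra|].
  destruct (open_line n Gam y g Ho Hy) as [t1 [Ht1 Hol]].
  set (K := Rabs (dot (gradf y) g) + 1).
  assert (HK : 0 < K) by (unfold K; pose proof (Rabs_pos (dot (gradf y) g)); lra).
  set (t := Rmin (Rmin (t0/2) (t1/2)) ((f x - f y) / (2*K))).
  assert (Tp : 0 < t).
  { unfold t. apply Rmin_glb_lt. apply Rmin_glb_lt; lra. apply Rdiv_lt_0_compat; lra. }
  assert (T0 : t < t0) by (unfold t; eapply Rle_lt_trans; [apply Rmin_l|]; eapply Rle_lt_trans; [apply Rmin_l|]; lra).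
  assert (T1 : t < t1) by (unfold t; eapply Rle_lt_trans; [apply Rmin_l|]; eapply Rle_lt_trans; [apply Rmin_r|]; lra).
  assert (T2 : t * K <= (f x - f y)/2).
  { assert (t <= (f x - f y) / (2*K)) by (unfold t; apply Rmin_r).
    apply Rmult_le_compat_r with (r := K) in H; [|lra].
    replace ((f x - f y) / (2 * K) * K) with ((f x - f y)/2) in H by (field; lra). lra. }
  assert (HG : Gam (vadd y (vscal t g))) by (apply Hol; lra).
  specialize (Hdd t (conj Tp T0) HG). apply Rabs_le_inv in Hdd.
  assert (Hab : dot (gradf y) g <= Rabs (dot (gradf y) g)) by apply Rle_abs.
  assert (Hfy : f (vadd y (vscal t g)) < f x) by (unfold K in T2; nra).
  pose proof (qc_grad n Gam f gradf x _ Hc Hq Hg Hx HG (Rlt_le _ _ Hfy)) as Hq'.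
  replace (vsub (vadd y (vscal t g)) x) with (fun i => 1 * vsub y x i + t * g i) in Hq'
    by (apply functional_extensionality; intro; unfold vsub, vadd, vscal; ring).
  rewrite dot_lin_r in Hq'. fold g in Hd, Hq'. nra.
Qed.

Lemma hard n (Gam S : vec n -> Prop) f gradf xbar x :
  vec_open_set Gam -> vec_convex_set Gam -> (forall x, S x -> Gam x) -> vec_convex_set S ->
  C1_on Gam f gradf -> quasiconvex_on Gam f ->
  argmin_on S f xbar -> gradf xbar <> vzero -> argmin_on S f x -> gradf x <> vzero.
Proof.
  intros Ho Hc HSG HSc [Hg Hcont] Hq [Sxb Mxb] Hnz [Sx Mx] Hx0.
  set (g := gradf xbar). set (d := vsub xbar x).
  assert (Gx : Gam x) by auto. assert (Gxb : Gam xbar) by auto.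
  assert (Efx : f x = f xbar) by (pose proof (Mx _ Sxb); pose proof (Mxb _ Sx); lra).
  pose proof (dot_self_pos _ g Hnz) as Hgg.
  assert (Hng : 0 < vnorm g) by (apply sqrt_lt_R0; auto).
  assert (Hng2 : vnorm g * vnorm g = dot g g) by (apply sqrt_sqrt; lra).
  destruct (Hcont xbar Gxb (vnorm g / 2)) as [del [Hdel Hcd]]; [lra|].
  pose proof (vnorm_nonneg _ d) as Hnd.
  set (mu := Rmin 1 (del / (2 * (vnorm d + 1)))).
  assert (Hmu : 0 < mu <= 1).
  { unfold mu. split. apply Rmin_glb_lt. lra. apply Rdiv_lt_0_compat; lra. apply Rmin_l. }
  assert (Hmud : mu * vnorm d < del).
  { assert (mu <= del / (2 * (vnorm d + 1))) by (unfold mu; apply Rmin_r).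
    apply Rmult_le_compat_r with (r := vnorm d + 1) in H; [|lra].
    replace (del / (2 * (vnorm d + 1)) * (vnorm d + 1)) with (del/2) in H by (field; lra). nra. }
  set (lam := 1 - mu).
  set (z := vadd x (vscal lam d)).
  assert (Sz : S z) by (apply HSc; auto; unfold lam; lra).
  assert (Gz : Gam z) by auto.
  assert (Efz : f z = f xbar).
  { pose proof (Mxb _ Sz). pose proof (Hq x xbar lam Gx Gxb) as Q.
    unfold lam in Q. fold d in Q. unfold lam in z. assert (f z <= Rmax (f x) (f xbar)) by (apply Q; lra).
    rewrite Efx, Rmax_left in H0 by lra. lra. }
  assert (Hzd : vnorm (vsub z xbar) < del).
  { replace (vsub z xbar) with (vscal (- mu) d).
    rewrite vnorm_scal, Rabs_left by lra. lra.
    apply functional_extensionality; intro; unfold z, lam, d, vsub, vadd, vscal; ring. }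
  specialize (Hcd z Gz Hzd). fold g in Hcd.
  assert (HG : dot (gradf z) g >= dot g g / 2).
  { pose proof (cs _ (vsub (gradf z) g) g) as C.
    replace (vsub (gradf z) g) with (fun i => 1 * gradf z i + (-1) * g i) in C
      by (apply functional_extensionality; intro; unfold vsub; ring).
    rewrite dot_lin_l in C. apply Rabs_le_inv in C.
    replace (vsub (gradf z) g) with (fun i => 1 * gradf z i + (-1) * g i) in Hcd
      by (apply functional_extensionality; intro; unfold vsub; ring).
    set (w := vnorm (fun i => 1 * gradf z i + -1 * g i)) in *.
    assert (w * vnorm g <= vnorm g / 2 * vnorm g) by (apply Rmult_le_compat_r; lra).
    lra. }
  destruct (dirderiv n Gam f gradf z g Hg Gz (dot g g / 4)) as [s0 [Hs0 Dz]]; [lra|].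
  destruct (dirderiv n Gam f gradf x g Hg Gx (mu * dot g g / 8)) as [T0 [HT0 Dx]];
    [assert (0 < mu * dot g g) by (apply Rmult_lt_0_compat; lra); lra|].
  destruct (open_line n Gam x g Ho Gx) as [T1 [HT1 Ol]].
  set (T := Rmin (Rmin T0 T1) s0 / 2).
  assert (HT : 0 < T /\ T < T0 /\ T < T1 /\ T < s0).
  { unfold T. pose proof (Rmin_l (Rmin T0 T1) s0). pose proof (Rmin_r (Rmin T0 T1) s0).
    pose proof (Rmin_l T0 T1). pose proof (Rmin_r T0 T1).
    assert (0 < Rmin (Rmin T0 T1) s0) by (apply Rmin_glb_lt; [apply Rmin_glb_lt|]; lra). lra. }
  destruct HT as [Tp [TT0 [TT1 Ts0]]].
  set (q := vadd x (vscal T g)).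
  assert (Gq : Gam q) by (apply Ol; lra).
  set (p := vadd q (vscal lam (vsub xbar q))).
  assert (Gp : Gam p) by (apply Hc; auto; unfold lam; lra).
  assert (Qp : f p <= Rmax (f q) (f xbar)) by (apply Hq; auto; unfold lam; lra).
  assert (Ep : p = vadd z (vscal (mu * T) g)).
  { apply functional_extensionality; intro; unfold p, q, z, lam, d, vsub, vadd, vscal; ring. }
  assert (Up : mu * T < s0) by nra.
  rewrite Ep in Gp, Qp.
  specialize (Dz (mu * T) (conj (Rmult_lt_0_compat _ _ (proj1 Hmu) Tp) Up) Gp). apply Rabs_le_inv in Dz.
  specialize (Dx T (conj Tp TT0) Gq). apply Rabs_le_inv in Dx.
  fold q in Dx. rewrite Hx0, dot_zero_l in Dx.
  assert (mu * T * dot g g > 0) by (apply Rmult_lt_0_compat; nra).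
  unfold Rmax in Qp. destruct (Rle_dec (f q) (f xbar)); nra.
Qed.

Theorem theorem3 (n : nat) (Gam S : vec n -> Prop) (f : vec n -> R)
  (gradf : vec n -> vec n) (xbar : vec n) :
  vec_open_set Gam -> vec_convex_set Gam ->
  (forall x, S x -> Gam x) -> (exists x, S x) -> vec_convex_set S ->
  C1_on Gam f gradf -> quasiconvex_on Gam f ->
  argmin_on S f xbar -> gradf xbar <> vzero ->
  let Sbar := argmin_on S f in
  let S1 := fun x => S x /\ dot (gradf x) (vsub xbar x) = 0 /\ gradf x <> vzero in
  let S2 := fun x => S x /\ dot (gradf x) (vsub xbar x) >= 0 /\ gradf x <> vzero in
  let S3 := fun x => S x /\ dot (gradf x) (vsub xbar x) = dot (gradf xbar) (vsub x xbar)
                         /\ gradf x <> vzero in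
  let S4 := fun x => S x /\ dot (gradf x) (vsub xbar x) >= dot (gradf xbar) (vsub x xbar)
                         /\ gradf x <> vzero in
  let S5 := fun x => S x /\ dot (gradf x) (vsub xbar x) = dot (gradf xbar) (vsub x xbar)
                         /\ dot (gradf xbar) (vsub x xbar) = 0 /\ gradf x <> vzero in
  set_eq Sbar S1 /\ set_eq Sbar S2 /\ set_eq Sbar S3 /\ set_eq Sbar S4 /\ set_eq Sbar S5.
Proof.
  intros Ho Hc HSG _ HSc HC1 Hq Hxb Hnz Sbar S1 S2 S3 S4 S5.
  unfold Sbar, S1, S2, S3, S4, S5, set_eq. clear Sbar S1 S2 S3 S4 S5.
  pose proof HC1 as [Hg _]. destruct Hxb as [Sxb Mxb].
  assert (A : forall x, argmin_on S f x ->
    dot (gradf x) (vsub xbar x) = 0 /\ dot (gradf xbar) (vsub x xbar) = 0 /\ gradf x <> vzero).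
  { intros x Hx. pose proof Hx as [Sx Mx].
    assert (Gx : Gam x) by auto. assert (Gxb : Gam xbar) by auto.
    pose proof (Mx _ Sxb). pose proof (Mxb _ Sx).
    split; [|split].
    - pose proof (qc_grad n Gam f gradf x xbar Hc Hq Hg Gx Gxb ltac:(lra)).
      pose proof (dir_ge n Gam f gradf x (vsub xbar x) Hg Gx) as D.
      assert (0 <= dot (gradf x) (vsub xbar x)); [|lra].
      apply D. intros t Ht. assert (S (vadd x (vscal t (vsub xbar x)))) by (apply HSc; auto; lra).
      split; auto.
    - pose proof (qc_grad n Gam f gradf xbar x Hc Hq Hg Gxb Gx ltac:(lra)).
      pose proof (dir_ge n Gam f gradf xbar (vsub x xbar) Hg Gxb) as D.
      assert (0 <= dot (gradf xbar) (vsub x xbar)); [|lra].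
      apply D. intros t Ht. assert (S (vadd xbar (vscal t (vsub x xbar)))) by (apply HSc; auto; lra).
      split; auto.
    - apply (hard n Gam S f gradf xbar x); auto. split; auto. }
  assert (B : forall x, S x -> dot (gradf x) (vsub xbar x) >= 0 -> gradf x <> vzero ->
    argmin_on S f x).
  { intros x Sx Hd Hn. pose proof (pseudo n Gam f gradf x xbar Ho Hc Hq Hg (HSG _ Sx) (HSG _ Sxb) Hn Hd).
    split; auto. intros y Sy. pose proof (Mxb _ Sy). lra. }
  assert (C : forall x, S x -> 0 <= dot (gradf xbar) (vsub x xbar)).
  { intros x Sx. apply (dir_ge n Gam f gradf xbar (vsub x xbar) Hg (HSG _ Sxb)).
    intros t Ht. assert (S (vadd xbar (vscal t (vsub x xbar)))) by (apply HSc; auto; lra).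
    split; auto. }
  split; [|split; [|split; [|split]]]. all: intro x; split; intro Hx.
  all: try (destruct (A x Hx) as [A1 [A2 A3]]; pose proof Hx as [Sx _]; repeat split; auto; lra).
  all: destruct Hx as [Sx Hx]; apply B; [auto| |];
    repeat match goal with H: _ /\ _ |- _ => destruct H end; try assumption;
    pose proof (C x Sx); lra.
Qed.
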